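(* Let $\mathbb{K}$ be a field and $n\geq 1$. (1) For non-empty subsets $I,J$ of $\{1,\dots,n\}$, the spaces $\mathcal{V}^{(1^\star)}_I$ and $\mathcal{V}^{(1^\star)}_J$ are similar if and only if $I=J$. (2) For non-empty proper subsets $I,J$ of $\{1,\dots,n\}$, the spaces $\mathcal{V}^{(2)}_I$ and $\mathcal{V}^{(2)}_J$ are similar if and only if $I=J$ or $I=\{1,\dots,n\}\setminus J$.
   Context: Two subsets $\mathcal{V},\mathcal{W}$ of $M_n(\mathbb{K})$ are similar if $\mathcal{W}=P\mathcal{V}P^{-1}$ for some invertible $P$. $\mathrm{NT}_n(\mathbb{K})$ is the space of strictly upper-triangular $n\times n$ matrices. For a non-empty $I\subset\{1,\dots,n\}$, $D_I$ is the diagonal matrix with $(i,i)$ entry $1$ for $i\in I$ and $0$ otherwise. $\mathcal{V}^{(1^\star)}_I:=\mathbb{K}D_I\oplus\mathrm{NT}_n(\mathbb{K})$, and for $I\neq\{1,\dots,n\}$, $\mathcal{V}^{(2)}_I:=\mathbb{K}I_n\oplus\mathbb{K}D_I\oplus\mathrm{NT}_n(\mathbb{K})$. *)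

(* Defs.v *)
From HB Require Import structures.
From mathcomp Require Import all_boot all_order all_algebra.
Set Implicit Arguments. Unset Strict Implicit. Unset Printing Implicit Defensive.
Import GRing.Theory.
Local Open Scope ring_scope.

(* Index set {1,...,n} is rendered as 'I_n = {0,...,n-1}. Subsets of M_n(K) are predicates. *)

Definition similar_sets (K : fieldType) (n : nat)
  (V W : 'M[K]_n -> Prop) : Prop :=
  exists P : 'M[K]_n, P \in unitmx /\
    (forall M : 'M[K]_n, W M <-> exists A : 'M[K]_n, V A /\ M = P *m A *m invmx P).

Definition strictly_upper (K : fieldType) (n : nat) (N : 'M[K]_n) : Prop :=
  forall i j : 'I_n, (j <= i)%N -> N i j = 0.

Definition diagI (K : fieldType) (n : nat) (I : {set 'I_n}) : 'M[K]_n :=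
  \matrix_(i, j) ((i == j) && (i \in I))%:R.

Definition V1star (K : fieldType) (n : nat) (I : {set 'I_n}) (M : 'M[K]_n) : Prop :=
  exists (a : K) (N : 'M[K]_n), strictly_upper N /\ M = a *: diagI K I + N.

Definition V2 (K : fieldType) (n : nat) (I : {set 'I_n}) (M : 'M[K]_n) : Prop :=
  exists (a b : K) (N : 'M[K]_n),
    strictly_upper N /\ M = a%:M + b *: diagI K I + N.

Arguments V1star K {n} I M.
Arguments V2 K {n} I M.

(* Main.v *)
Require Import Defs.
From HB Require Import structures.
From mathcomp Require Import all_boot all_order all_algebra.
From mathcomp Require Import zify ring.
Set Implicit Arguments. Unset Strict Implicit. Unset Printing Implicit Defensive.
Import GRing.Theory.
Local Open Scope ring_scope.

Section Aux.
Variables (K : fieldType) (n : nat).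
Implicit Types (X Y U V : 'M[K]_n).

Definition upper X := forall i j : 'I_n, (j < i)%N -> X i j = 0.

Lemma entry_delta X Y (k l i j : 'I_n) :
  (X *m delta_mx k l *m Y) i j = X i k * Y l j.
Proof.
rewrite !mxE (bigD1 l) //= big1 ?addr0.
  rewrite !mxE (bigD1 k) //= big1 ?addr0; first by rewrite !mxE !eqxx mulr1.
  by move=> m /negbTE hm; rewrite mxE hm mulr0.
move=> m /negbTE hm; rewrite !mxE big1 ?mul0r // => p _.
by rewrite mxE hm andbF mulr0.
Qed.

Lemma upper_mul U V : upper U -> upper V -> upper (U *m V).
Proof.
move=> hU hV i j hji; rewrite mxE big1 // => m _.
case: (ltnP m i) => hm; first by rewrite hU // mul0r.
by rewrite hV ?mulr0 //; apply: leq_trans hji hm.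
Qed.

Lemma diag_mul U V j : upper U -> upper V -> (U *m V) j j = U j j * V j j.
Proof.
move=> hU hV; rewrite mxE (bigD1 j) //= big1 ?addr0 // => m hm.
case: (ltngtP m j) => h; first by rewrite hU // mul0r.
  by rewrite hV // mulr0.
by move: hm; rewrite (val_inj h) eqxx.
Qed.

Lemma key X Y : Y *m X = 1%:M ->
  (forall k l : 'I_n, (k < l)%N -> strictly_upper (X *m delta_mx k l *m Y)) ->
  upper X.
Proof.
move=> hYX hS.
suff: forall m (i k : 'I_n), (n - m <= i)%N -> (k < i)%N -> X i k = 0.
  by move=> H i k hki; apply: (H n) => //; rewrite subnn.
elim=> [|m IH] i k hi hki.
  by move: hi; rewrite subn0 leqNgt ltn_ord.
apply/eqP/negPn/negP => hX.
have hk1 : (k.+1 < n)%N by apply: leq_ltn_trans hki (ltn_ord i).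
pose k1 := Ordinal hk1.
have hY : forall j : 'I_n, (j <= i)%N -> Y k1 j = 0.
  move=> j hj; have := hS k k1 (ltnSn k) i j hj.
  by rewrite entry_delta => /eqP; rewrite mulf_eq0 (negbTE hX) /= => /eqP.
have : (Y *m X) k1 k1 = 0.
  rewrite mxE big1 // => p _.
  case: (leqP p i) => hp; first by rewrite hY // mul0r.
  rewrite (IH p k1) ?mulr0 //; last by apply: leq_ltn_trans hki hp.
  by move: hi hp; lia.
by rewrite hYX mxE eqxx /= => /eqP; rewrite oner_eq0.
Qed.


Lemma conj_mul X Y A B : Y *m X = 1%:M ->
  (X *m A *m Y) *m (X *m B *m Y) = X *m (A *m B) *m Y.
Proof.
by move=> h; rewrite -!mulmxA (mulmxA Y) h mul1mx.
Qed.

Lemma sim_upper (V W : 'M[K]_n -> Prop) P :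
  P \in unitmx ->
  (forall M, W M <-> exists A, V A /\ M = P *m A *m invmx P) ->
  (forall k l : 'I_n, (k < l)%N -> V (delta_mx k l)) ->
  (forall k l : 'I_n, (k < l)%N -> W (delta_mx k l)) ->
  (forall M, V M -> M *m M = 0 -> strictly_upper M) ->
  (forall M, W M -> M *m M = 0 -> strictly_upper M) ->
  upper P /\ upper (invmx P).
Proof.
move=> hP hsim hV hW sV sW; split.
  apply: (key (mulVmx hP)) => k l hkl.
  apply: sW; first by apply/hsim; exists (delta_mx k l); split => //; exact: hV.
  rewrite conj_mul ?mulVmx // mul_delta_mx_0; first by rewrite mulmx0 mul0mx.
  by rewrite -(inj_eq val_inj) /= neq_ltn hkl orbT.
apply: (key (mulmxV hP)) => k l hkl.
have [A [hA hE]] := (hsim (delta_mx k l)).1 (hW k l hkl).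
have -> : invmx P *m delta_mx k l *m P = A.
  by rewrite hE !mulmxA mulVmx // mul1mx -mulmxA mulVmx // mulmx1.
apply: sV => //.
have -> : A = invmx P *m delta_mx k l *m P.
  by rewrite hE !mulmxA mulVmx // mul1mx -mulmxA mulVmx // mulmx1.
rewrite conj_mul ?mulmxV // mul_delta_mx_0; first by rewrite mulmx0 mul0mx.
by rewrite -(inj_eq val_inj) /= neq_ltn hkl orbT.
Qed.

Lemma diagI_upper (I : {set 'I_n}) : upper (diagI K I).
Proof. by move=> i j hij; rewrite mxE; case: eqP => // h; move: hij; rewrite h ltnn. Qed.

Lemma diag_conj P Q (I : {set 'I_n}) j : upper P -> upper Q -> P *m Q = 1%:M ->
  (P *m diagI K I *m Q) j j = diagI K I j j.
Proof.
move=> hP hQ hPQ.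
have := diag_mul j hP hQ; rewrite hPQ mxE eqxx /= => h1.
rewrite diag_mul ?diag_mul //; last by apply: upper_mul => //; exact: diagI_upper.
  by rewrite mulrAC -h1 mul1r.
exact: diagI_upper.
Qed.

Lemma su_upper X : strictly_upper X -> upper X.
Proof. by move=> h i j hij; apply: h; apply: ltnW. Qed.

Lemma su_diag X j : strictly_upper X -> X j j = 0.
Proof. by move=> h; apply: h. Qed.

Lemma delta_su (k l : 'I_n) : (k < l)%N -> strictly_upper (delta_mx k l : 'M[K]_n).
Proof.
move=> hkl i j hji; rewrite mxE.
case: (eqP : reflect (i = k) (i == k)) => [hi|_]; last by rewrite andFb.
case: (eqP : reflect (j = l) (j == l)) => [hj|_]; last by rewrite andbF.
by move: hji; rewrite hj hi leqNgt hkl.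
Qed.


Lemma upperD U V : upper U -> upper V -> upper (U + V).
Proof. by move=> hU hV i j h; rewrite mxE hU // hV // addr0. Qed.
Lemma upperZ (a : K) U : upper U -> upper (a *: U).
Proof. by move=> hU i j h; rewrite mxE hU // mulr0. Qed.
Lemma upperS (a : K) : upper (a%:M : 'M[K]_n).
Proof. by move=> i j h; rewrite mxE; case: eqP => // e; move: h; rewrite e ltnn. Qed.

Lemma V1_sq (J : {set 'I_n}) M : J != set0 -> V1star K J M -> M *m M = 0 -> strictly_upper M.
Proof.
case/set0Pn=> j hj [a [N [hN ->]]] hsq.
have hu : upper (a *: diagI K J + N).
  by apply: upperD; [apply: upperZ; exact: diagI_upper | exact: su_upper].
have := diag_mul j hu hu; rewrite hsq.
have -> : (a *: diagI K J + N) j j = a.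
  by rewrite mxE (su_diag j hN) addr0 mxE mxE eqxx hj mulr1.
rewrite mxE => /eqP; rewrite eq_sym mulf_eq0 orbb => /eqP ->.
by rewrite scale0r add0r.
Qed.

Lemma notT_ex (J : {set 'I_n}) : J != setT -> exists j, j \notin J.
Proof.
move=> h; have : ~: J != set0.
  by apply: contra h => /eqP h0; apply/eqP; rewrite -(setCK J) h0 setC0.
by case/set0Pn=> j; rewrite in_setC => hj; exists j.
Qed.

Lemma V2_sq (J : {set 'I_n}) M : J != set0 -> J != setT -> V2 K J M -> M *m M = 0 -> strictly_upper M.
Proof.
case/set0Pn=> j hj; case/notT_ex=> j' hj' [a [b [N [hN ->]]]] hsq.
have hu : upper (a%:M + b *: diagI K J + N).
  apply: upperD; last exact: su_upper.
  by apply: upperD; [exact: upperS | apply: upperZ; exact: diagI_upper].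
have dg : forall i, (a%:M + b *: diagI K J + N) i i = a + b * (i \in J)%:R.
  by move=> i; rewrite mxE (su_diag i hN) addr0 mxE !mxE eqxx /= mulr1n.
have sq0 : forall i, (a + b * (i \in J)%:R) = 0.
  move=> i; have := diag_mul i hu hu; rewrite hsq dg mxE => /eqP.
  by rewrite eq_sym mulf_eq0 orbb => /eqP.
have := sq0 j'; rewrite (negbTE hj') mulr0 addr0 => ha.
subst a; have := sq0 j; rewrite add0r hj mulr1 => hb; subst b.
by rewrite scale0r -scalemx1 scale0r !add0r.
Qed.

Lemma V1_delta (I : {set 'I_n}) (k l : 'I_n) : (k < l)%N -> V1star K I (delta_mx k l).
Proof. by move=> h; exists 0, (delta_mx k l); split; [exact: delta_su | rewrite scale0r add0r]. Qed.

Lemma V2_delta (I : {set 'I_n}) (k l : 'I_n) : (k < l)%N -> V2 K I (delta_mx k l).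
Proof.
move=> h; exists 0, 0, (delta_mx k l); split; first exact: delta_su.
by rewrite scale0r -scalemx1 scale0r !add0r.
Qed.

End Aux.

Lemma diagC (K : fieldType) (n : nat) (J : {set 'I_n}) (x y : K) :
  x%:M + y *: diagI K (~: J) = (x + y)%:M + (- y) *: diagI K J.
Proof.
apply/matrixP => i j; rewrite !mxE in_setC.
case: eqP => _ /=; last by rewrite !mulr0.
by case: (i \in J) => /=; rewrite ?mulr1 ?mulr0 ?mulr0n ?mulr1n; ring.
Qed.

Theorem mainTheorem3 (K : fieldType) (n : nat) (hn : (0 < n)%N) :
  (forall I J : {set 'I_n}, I != set0 -> J != set0 ->
     (similar_sets (V1star K I) (V1star K J) <-> I = J)) /\
  (forall I J : {set 'I_n}, I != set0 -> J != set0 ->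
     I != setT -> J != setT ->
     (similar_sets (V2 K I) (V2 K J) <-> (I = J \/ I = ~: J))).
Proof.
have refl : forall V : 'M[K]_n -> Prop, similar_sets V V.
  move=> V; exists 1%:M; split; first exact: unitmx1.
  move=> M; rewrite invmx1; split.
    by move=> h; exists M; rewrite mul1mx mulmx1.
  by case=> A [hA ->]; rewrite mul1mx mulmx1.
split.
  move=> I J hI hJ; split; last by move=> ->; apply: refl.
  case=> P [hP hsim].
  have [uP uQ] := sim_upper hP hsim (@V1_delta K n I) (@V1_delta K n J) (fun M => V1_sq (M:=M) hI) (fun M => V1_sq (M:=M) hJ).
  have : V1star K J (P *m diagI K I *m invmx P).
    apply/hsim; exists (diagI K I); split => //; exists 1, 0; split.
      by move=> *; rewrite mxE.
    by rewrite scale1r addr0.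
  case=> a [N [hN hE]].
  have hd : forall j, (j \in I)%:R = a * (j \in J)%:R :> K.
    move=> j; have := diag_conj I j uP uQ (mulmxV hP).
    rewrite hE mxE (su_diag j hN) addr0 !mxE eqxx /= => <-; by [].
  case/set0Pn: (hI) => i0 hi0.
  have := hd i0; rewrite hi0; case: (i0 \in J) => /=; last first.
    by rewrite mulr0 => /eqP; rewrite oner_eq0.
  rewrite mulr1 => ha.
  apply/setP => j; have := hd j; rewrite -ha mul1r.
  case: (j \in I); case: (j \in J) => //= /eqP; by rewrite ?oner_eq0 // eq_sym oner_eq0.
move=> I J hI hJ hIT hJT; split; last first.
  case=> ->; first by apply: refl.
  exists 1%:M; split; first exact: unitmx1.
  move=> M; rewrite invmx1; split.
    case=> a [b [N [hN ->]]]; exists (a%:M + b *: diagI K J + N); split; last by rewrite mul1mx mulmx1.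
    exists (a + b), (- b), N; split => //; by rewrite diagC addrK opprK.
  case=> A [[a [b [N [hN ->]]]] ->]; rewrite mul1mx mulmx1; exists (a + b), (- b), N; split => //.
  by rewrite diagC.
case=> P [hP hsim].
have [uP uQ] := sim_upper hP hsim (@V2_delta K n I) (@V2_delta K n J) (fun M => V2_sq (M:=M) hI hIT) (fun M => V2_sq (M:=M) hJ hJT).
have : V2 K J (P *m diagI K I *m invmx P).
  apply/hsim; exists (diagI K I); split => //; exists 0, 1, 0; split.
    by move=> *; rewrite mxE.
  by rewrite scale1r addr0 -scalemx1 scale0r add0r.
case=> a [b [N [hN hE]]].
have hd : forall j, (j \in I)%:R = a + b * (j \in J)%:R :> K.
  move=> j; have := diag_conj I j uP uQ (mulmxV hP).
  rewrite hE mxE (su_diag j hN) addr0 mxE !mxE eqxx /= mulr1n => <-; by [].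
have ne10 : (1 : K) != 0 by rewrite oner_eq0.
case/notT_ex: (hJT) => j1 hj1.
have := hd j1; rewrite (negbTE hj1) mulr0 addr0 => ha.
case hi1 : (j1 \in I) in ha.
  right; move: ha => /= ha.
  have hout : forall j, j \notin J -> j \in I.
    move=> j hj; have := hd j; rewrite (negbTE hj) mulr0 addr0 -ha.
    by case: (j \in I) => // /eqP; rewrite eq_sym oner_eq0.
  have [j3 [hj3J hj3I]] : exists j3, j3 \in J /\ j3 \notin I.
    case/notT_ex: (hIT) => j3 hj3; exists j3; split => //.
    by apply: contraR hj3 => h; apply: hout.
  have hb : 1 + b = 0.
    by have := hd j3; rewrite hj3J (negbTE hj3I) mulr1 -ha.
  apply/setP => j; rewrite in_setC.
  case hjJ : (j \in J); last by apply: hout; rewrite hjJ.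
  have := hd j; rewrite hjJ mulr1 -ha hb.
  by case: (j \in I) => // /eqP; rewrite oner_eq0.
left; move: ha => /= ha.
case/set0Pn: (hI) => i0 hi0.
have hi0J : i0 \in J.
  apply: contraT => h; have := hd i0; rewrite hi0 (negbTE h) mulr0 addr0 -ha.
  by move/eqP; rewrite oner_eq0.
have hb : b = 1 by have := hd i0; rewrite hi0 hi0J mulr1 -ha add0r.
apply/setP => j; have := hd j; rewrite -ha add0r hb mul1r.
case: (j \in I); case: (j \in J) => //= /eqP; by rewrite ?oner_eq0 // eq_sym oner_eq0.
Qed.
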